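(* In the setting below, with $\gamma=(1+\sqrt2)^2$, there exist constants $C_1,C_2>0$ such that for all $N\in\mathbb{N}_0$ and all $M\ge C_1N^2\gamma^N$, the matrix $\hat H_N^{(M)}$ is invertible and $\|(H_N^{(M)})^\dagger\|_{\ell^2}\le C_2\gamma^N$.
   Context: For $M,N\in\mathbb{N}$ and $0\le\delta\le2/M$ let $x_m=-1+\delta+2m/M$, $m=0,\dots,M-1$, and let $\hat H_N^{(M)}$ be the $N\times N$ matrix $(\hat H_N^{(M)})_{k\ell}=\frac1M\sum_{m=0}^{M-1}x_m^kx_m^\ell$, $k,\ell\in\{0,\dots,N-1\}$. $H_N^{(M)}$ is its lift to $\ell^2(\mathbb{N}_0)$ (acting as $\hat H_N^{(M)}$ on the first $N$ coordinates and as $0$ on the orthogonal complement), and, when $\hat H_N^{(M)}$ is invertible, $(H_N^{(M)})^\dagger$ is the lift of $(\hat H_N^{(M)})^{-1}$ in the same way. $\|\cdot\|_{\ell^2}$ is the operator norm on $\ell^2(\mathbb{N}_0)$. *)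

(* Defs.v *)
From HB Require Import structures.
From mathcomp Require Import all_boot all_order all_algebra.
From mathcomp Require Import all_classical all_reals all_analysis.
Set Implicit Arguments. Unset Strict Implicit. Unset Printing Implicit Defensive.
Import Order.TTheory GRing.Theory Num.Theory.
Local Open Scope ring_scope.

Definition xpt (R : realType) (M : nat) (delta : R) (m : nat) : R :=
  -1 + delta + 2 * m%:R / M%:R.

Definition hatH (R : realType) (N M : nat) (delta : R) : 'M[R]_N :=
  \matrix_(k < N, l < N)
     (M%:R^-1 * \sum_(0 <= m < M) xpt M delta m ^+ k * xpt M delta m ^+ l).

(* Lift of an N x N matrix to an operator on sequences (l^2(N_0)):
   acts as A on the first N coordinates and as 0 on the complement. *)
Definition lift_l2 (R : realType) (N : nat) (A : 'M[R]_N) (u : nat -> R) : nat -> R :=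
  fun k => match insub k : option 'I_N with
           | Some i => \sum_(j < N) A i j * u j
           | None => 0
           end.

(* Squared l^2 norm of a sequence, as an extended real (+oo if not in l^2). *)
Definition l2norm2 (R : realType) (u : nat -> R) : \bar R :=
  (\sum_(k <oo) ((u k) ^+ 2)%:E)%E.

Definition opnorm_le (R : realType) (T : (nat -> R) -> (nat -> R)) (c : R) : Prop :=
  forall u : nat -> R, (l2norm2 u < +oo)%E -> (l2norm2 (T u) <= (c ^+ 2)%:E * l2norm2 u)%E.

Definition gamma (R : realType) : R := (1 + Num.sqrt 2) ^+ 2.

(* Main.v *)
Require Import Defs.
From HB Require Import structures.
From mathcomp Require Import all_boot all_order all_algebra.
From mathcomp Require Import all_classical all_reals all_analysis.
From mathcomp Require Import ring lra zify.
Import Order.TTheory GRing.Theory Num.Theory.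
Local Open Scope ring_scope.
Set Implicit Arguments. Unset Strict Implicit. Unset Printing Implicit Defensive.

Definition mom {R : rcfType} (n : nat) : R := if odd n then 0 else (n.+1%:R)^-1.
Definition Lf {R : rcfType} (p : {poly R}) : R := \sum_(i < size p) p`_i * mom i.

Lemma Lf_wide {R : rcfType} n (p : {poly R}) : (size p <= n)%N ->
  Lf p = \sum_(i < n) p`_i * mom i.
Proof.
move=> hn; rewrite /Lf -(subnKC hn) big_split_ord /=.
rewrite [X in _ + X]big1 ?addr0 // => i _.
by rewrite (leq_sizeP _ _ (leqnn _)) ?mul0r // leq_addr.
Qed.

Lemma LfD {R : rcfType} (p q : {poly R}) : Lf (p + q) = Lf p + Lf q.
Proof.
pose n := maxn (size p) (size q).
rewrite (@Lf_wide _ n) ?size_polyD // (@Lf_wide _ n p) ?leq_maxl //.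
rewrite (@Lf_wide _ n q) ?leq_maxr // -big_split /=.
by apply: eq_bigr => i _; rewrite coefD mulrDl.
Qed.

Lemma LfZ {R : rcfType} (c : R) (p : {poly R}) : Lf (c *: p) = c * Lf p.
Proof.
rewrite (@Lf_wide _ (size p)) ?size_scale_leq // /Lf mulr_sumr.
by apply: eq_bigr => i _; rewrite coefZ mulrA.
Qed.

Lemma Lf0 {R : rcfType} : Lf (0 : {poly R}) = 0.
Proof. by rewrite /Lf size_poly0 big_ord0. Qed.

Lemma LfN {R : rcfType} (p : {poly R}) : Lf (- p) = - Lf p.
Proof. by rewrite -scaleN1r LfZ mulN1r. Qed.

Lemma LfB {R : rcfType} (p q : {poly R}) : Lf (p - q) = Lf p - Lf q.
Proof. by rewrite LfD LfN. Qed.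

Lemma Lf_nat {R : rcfType} k (p : {poly R}) : Lf (k%:R * p) = k%:R * Lf p.
Proof. by rewrite mulr_natl -scaler_nat LfZ. Qed.

Lemma Lf_sum {R : rcfType} (I : Type) (r : seq I) (P : pred I) (F : I -> {poly R}) :
  Lf (\sum_(i <- r | P i) F i) = \sum_(i <- r | P i) Lf (F i).
Proof. by apply: (big_morph Lf LfD Lf0). Qed.

Lemma size_deriv_le {R : rcfType} (p : {poly R}) : (size p^`() <= size p)%N.
Proof.
apply/leq_sizeP => j hj; rewrite coef_deriv (leq_sizeP _ _ (leqnn _)) ?mul0rn //.
exact: leq_trans hj _.
Qed.

Lemma mom_deriv {R : rcfType} i : i.+1%:R * mom i = (1 - (-1) ^+ i.+1) / 2 :> R.
Proof.
rewrite /mom -signr_odd /=; case: (odd i).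
  by rewrite expr0; ring.
by rewrite expr1; field; rewrite addrC natr1 pnatr_eq0.
Qed.

Lemma Lf_deriv {R : rcfType} (p : {poly R}) :
  Lf p^`() = (p.[1] - p.[-1]) / 2.
Proof.
rewrite (@Lf_wide _ (size p)) ?size_deriv_le //.
rewrite !(@horner_coef_wide _ (size p).+1) // -sumrB mulr_suml big_ord_recl /=.
rewrite !expr0 subrr mul0r add0r; apply: eq_bigr => i _.
rewrite coef_deriv.
have -> : forall x : R, x *+ i.+1 * mom i = x * (i.+1%:R * mom i).
  by move=> x; rewrite mulrA mulr_natr.
rewrite mom_deriv /bump /= add1n.
by rewrite expr1n; ring.
Qed.

Fixpoint legp {R : rcfType} (n : nat) : {poly R} * {poly R} :=
  match n with
  | 0 => (1, 'X)
  | n'.+1 => let: (a, b) := legp n' in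
      (b, (n'.+2%:R)^-1 *: ((2 * n' + 3)%:R *: (b * 'X) - n'.+1%:R *: a))
  end.

Definition P {R : rcfType} n : {poly R} := (legp n).1.

Lemma legp_snd {R : rcfType} n : (legp n).2 = P (R:=R) n.+1.
Proof. by rewrite /P /=; case: (legp n). Qed.

Lemma P0 {R : rcfType} : P 0 = (1 : {poly R}).
Proof. by []. Qed.

Lemma P1 {R : rcfType} : P 1 = ('X : {poly R}).
Proof. by []. Qed.

Lemma Prec {R : rcfType} n : P n.+2 =
  (n.+2%:R)^-1 *: ((2 * n + 3)%:R *: (P n.+1 * 'X) - n.+1%:R *: P (R:=R) n).
Proof.
rewrite -legp_snd /= -(legp_snd n) /P.
by case: (legp n) => a b.
Qed.

Lemma natr_neq0 {R : rcfType} n : (n.+1%:R : R) != 0.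
Proof. by rewrite pnatr_eq0. Qed.

Lemma polyn_neq0 {R : rcfType} n : (n.+1%:R : {poly R}) != 0.
Proof. by rewrite -polyC_natr polyC_eq0 natr_neq0. Qed.

Lemma Pmul {R : rcfType} n : (n.+2%:R : {poly R}) * P n.+2 =
  (2 * n + 3)%:R * (P n.+1 * 'X) - n.+1%:R * P n.
Proof.
rewrite Prec -!polyC_natr !mul_polyC scalerA mulfV ?natr_neq0 // scale1r.
by [].
Qed.

Lemma dnat {R : rcfType} k (p : {poly R}) : (k%:R * p)^`() = k%:R * p^`().
Proof. by rewrite !mulr_natl derivMn. Qed.

Lemma dX {R : rcfType} (p : {poly R}) : (p * 'X)^`() = p^`() * 'X + p.
Proof. by rewrite derivM derivX mulr1. Qed.

Lemma B_of_Q {R : rcfType} m :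
  (P m.+1)^`() * 'X - (P m)^`() = m.+1%:R * P (R:=R) m.+1 ->
  (P m.+2)^`() = (2 * m + 3)%:R * P m.+1 + (P (R:=R) m)^`().
Proof.
move=> /eqP; rewrite subr_eq => /eqP hQ.
apply: (mulfI (polyn_neq0 (R:=R) m.+1)).
have h := congr1 deriv (Pmul (R:=R) m).
rewrite dnat derivB !dnat dX hQ in h.
rewrite h; ring.
Qed.

Lemma PQ2 {R : rcfType} m :
  (P m.+1)^`() * 'X - (P m)^`() = m.+1%:R * P (R:=R) m.+1 /\
  (P m.+2)^`() * 'X - (P m.+1)^`() = m.+2%:R * P (R:=R) m.+2.
Proof.
elim: m => [|m [IH1 IH2]].
  have Q0 : (P 1)^`() * 'X - (P 0)^`() = 1%:R * P (R:=R) 1.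
    by rewrite P1 P0 derivX derivC subr0 mul1r.
  split=> //.
  apply: (mulfI (polyn_neq0 (R:=R) 1)).
  have h := congr1 deriv (Pmul (R:=R) 0).
  rewrite dnat derivB !dnat dX in h.
  have h0 := Pmul (R:=R) 0.
  have -> : (2%:R:{poly R}) * ((P 2)^`() * 'X - (P 1)^`()) =
       (2%:R * (P 2)^`()) * 'X - 2%:R * (P 1)^`() by ring.
  rewrite h h0 P1 P0 derivX derivC; ring.
split=> //.
have B1 := B_of_Q IH2.
have B0 := B_of_Q IH1.
move/eqP: IH1; rewrite subr_eq => /eqP hQ.
rewrite Pmul B1 B0 mulrDl hQ; ring.
Qed.

Lemma PQ {R : rcfType} m :
  (P m.+1)^`() * 'X - (P m)^`() = m.+1%:R * P (R:=R) m.+1.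
Proof. by case: (PQ2 (R:=R) m). Qed.

Lemma PB {R : rcfType} m :
  (P m.+2)^`() = (2 * m + 3)%:R * P m.+1 + (P (R:=R) m)^`().
Proof. exact: B_of_Q (PQ (R:=R) m). Qed.

Lemma hornerNat {R : rcfType} k (p : {poly R}) x : (k%:R * p).[x] = k%:R * p.[x].
Proof. by rewrite -polyC_natr hornerCM. Qed.

Lemma cancel_nat {R : rcfType} k (x y : R) : k.+1%:R * x = k.+1%:R * y -> x = y.
Proof. exact: (mulfI (natr_neq0 k)). Qed.

Lemma cancel_natn {R : rcfType} k (x y : R) : (0 < k)%N ->
  k%:R * x = k%:R * y -> x = y.
Proof. by case: k => // k _; apply: cancel_nat. Qed.

Lemma Peval {R : rcfType} n :
  ((P (R:=R) n).[1] = 1 /\ (P (R:=R) n.+1).[1] = 1) /\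
  ((P (R:=R) n).[-1] = (-1) ^+ n /\ (P (R:=R) n.+1).[-1] = (-1) ^+ n.+1).
Proof.
elim: n => [|n [[IH1 IH2] [IH3 IH4]]].
  by rewrite P0 P1 !hornerE.
split; split => //.
  apply: (@cancel_nat R n.+1).
  have h := congr1 (horner^~ 1) (Pmul (R:=R) n).
  rewrite /= hornerNat hornerD hornerN !hornerNat hornerMX IH1 IH2 in h.
  by rewrite h; ring.
apply: (@cancel_nat R n.+1).
have h := congr1 (horner^~ (-1)) (Pmul (R:=R) n).
rewrite /= hornerNat hornerD hornerN !hornerNat hornerMX IH3 IH4 in h.
by rewrite h !exprS; ring.
Qed.

Lemma LfP {R : rcfType} m : Lf (P (R:=R) m.+1) = 0.
Proof.
have h : ((2 * m + 3)%:R * P (R:=R) m.+1) = (P m.+2)^`() - (P m)^`().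
  by rewrite PB; ring.
have h2 := congr1 Lf h.
rewrite Lf_nat LfB !Lf_deriv in h2.
have [[e1 _] [e2 _]] := Peval (R:=R) m.
have [[_ e3] [_ e4]] := Peval (R:=R) m.+1.
rewrite e1 e2 e3 e4 !exprS in h2.
apply: (@cancel_natn R (2 * m + 3)); first by rewrite addnC.
rewrite mulr0 h2; ring.
Qed.

Lemma nu0 {R : rcfType} k n : (k < n)%N -> Lf (P (R:=R) n * 'X^k) = 0.
Proof.
elim: k n => [|k IH] n hkn.
  by case: n hkn => // n _; rewrite expr0 mulr1 LfP.
case: n hkn => [|[|m]] // hkm.
have E : (2 * m.+1 + 3)%:R * (P (R:=R) m.+2 * 'X) =
         m.+3%:R * P m.+3 + m.+2%:R * P m.+1.
  by rewrite Pmul; ring.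
apply: (@cancel_natn R (2 * m.+1 + 3)); first by rewrite addnC.
rewrite mulr0 -Lf_nat exprS mulrA.
have -> : (2 * m.+1 + 3)%:R * P (R:=R) m.+2 * ('X * 'X^k) =
   ((2 * m.+1 + 3)%:R * (P m.+2 * 'X)) * 'X^k by ring.
rewrite E mulrDl LfD -!mulrA !Lf_nat !IH ?mulr0 ?addr0 //.
by lia.
Qed.

Lemma Pstep {R : rcfType} n : size (P (R:=R) n) = n.+1 -> size (P (R:=R) n.+1) = n.+2 ->
  size (P (R:=R) n.+2) = n.+3 /\
  lead_coef (P (R:=R) n.+2) = (n.+2%:R)^-1 * ((2 * n + 3)%:R * lead_coef (P (R:=R) n.+1)).
Proof.
move=> s0 s1.
have nz1 : P (R:=R) n.+1 != 0 by rewrite -size_poly_eq0 s1.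
have c3 : ((2 * n + 3)%:R : R) != 0 by rewrite pnatr_eq0 addnC.
have c2 : ((n.+2)%:R : R)^-1 != 0 by rewrite invr_eq0 pnatr_eq0.
have sA : size ((2 * n + 3)%:R *: (P (R:=R) n.+1 * 'X)) = n.+3.
  by rewrite size_scale // size_mulX // s1.
have sB : (size (- (n.+1%:R *: P (R:=R) n)) < n.+3)%N.
  by rewrite size_opp (leq_ltn_trans (size_scale_leq _ _)) // s0.
rewrite Prec size_scale // lead_coefZ size_polyDl ?sA //.
by rewrite lead_coefDl ?sA // lead_coefZ lead_coefMX.
Qed.

Lemma Psize2 {R : rcfType} n :
  (size (P (R:=R) n) = n.+1 /\ 0 < lead_coef (P (R:=R) n)) /\
  (size (P (R:=R) n.+1) = n.+2 /\ 0 < lead_coef (P (R:=R) n.+1)).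
Proof.
elim: n => [|n [[s0 l0] [s1 l1]]].
  by rewrite P0 P1 size_poly1 size_polyX lead_coef1 lead_coefX ltr01.
split=> //; have [-> ->] := Pstep s0 s1; split=> //.
by rewrite mulr_gt0 ?invr_gt0 ?ltr0n // mulr_gt0 // ltr0n addnC.
Qed.

Lemma Psize {R : rcfType} n : size (P (R:=R) n) = n.+1.
Proof. by case: (Psize2 (R:=R) n) => [[]]. Qed.

Lemma Plead_gt0 {R : rcfType} n : 0 < lead_coef (P (R:=R) n).
Proof. by case: (Psize2 (R:=R) n) => [[]]. Qed.

Lemma Plead_rec {R : rcfType} n :
  n.+1%:R * lead_coef (P (R:=R) n.+1) = (2 * n + 1)%:R * lead_coef (P (R:=R) n).
Proof.
case: n => [|m]; first by rewrite P0 P1 lead_coef1 lead_coefX.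
have [_ ->] := Pstep (Psize (R:=R) m) (Psize m.+1).
by rewrite mulrA mulfV ?natr_neq0 // mul1r; congr (_%:R * _); lia.
Qed.

Lemma Lf_expand {R : rcfType} (q p : {poly R}) :
  Lf (q * p) = \sum_(k < size p) p`_k * Lf (q * 'X^k).
Proof.
rewrite -{1}(coefK p) poly_def mulr_sumr Lf_sum; apply: eq_bigr => k _.
by rewrite -scalerAr LfZ.
Qed.

Lemma Lf1 {R : rcfType} : Lf (1 : {poly R}) = 1.
Proof. by rewrite /Lf size_poly1 big_ord1 coefC /= mul1r /mom /= invr1. Qed.

Lemma Porth {R : rcfType} i n : (i < n)%N -> Lf (P (R:=R) i * P n) = 0.
Proof.
move=> hin; rewrite mulrC Lf_expand Psize big1 // => k _.
by rewrite nu0 ?mulr0 // (leq_ltn_trans _ hin) // -ltnS.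
Qed.

Lemma Lf_PP_lead {R : rcfType} n :
  Lf (P (R:=R) n * P n) = lead_coef (P (R:=R) n) * Lf (P n * 'X^n).
Proof.
rewrite Lf_expand Psize big_ord_recr /= big1 ?add0r.
  by rewrite lead_coefE Psize.
by move=> k _; rewrite nu0 ?mulr0.
Qed.

Lemma nu_diag {R : rcfType} n :
  (2 * n + 3)%:R * Lf (P (R:=R) n.+1 * 'X^(n.+1)) = n.+1%:R * Lf (P (R:=R) n * 'X^n).
Proof.
have E : (2 * n + 3)%:R * (P (R:=R) n.+1 * 'X) =
         n.+2%:R * P n.+2 + n.+1%:R * P n.
  by rewrite Pmul; ring.
rewrite -Lf_nat exprS.
have -> : (2 * n + 3)%:R * (P (R:=R) n.+1 * ('X * 'X^n)) =
   ((2 * n + 3)%:R * (P n.+1 * 'X)) * 'X^n by ring.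
by rewrite E mulrDl LfD -!mulrA !Lf_nat nu0 // mulr0 add0r.
Qed.

Lemma Pnorm {R : rcfType} n : (2 * n + 1)%:R * Lf (P (R:=R) n * P n) = 1.
Proof.
elim: n => [|n IH]; first by rewrite P0 mulr1 Lf1 mulr1.
rewrite -[X in _ = X]IH !Lf_PP_lead.
apply: (@cancel_natn R n.+1) => //.
transitivity ((n.+1%:R * lead_coef (P (R:=R) n.+1)) *
   ((2 * n + 3)%:R * Lf (P (R:=R) n.+1 * 'X^(n.+1)))); first by ring.
rewrite nu_diag Plead_rec; ring.
Qed.


Lemma sq_le {R : rcfType} (u v : R) : 0 <= u -> 0 <= v -> u ^+ 2 <= v ^+ 2 -> u <= v.
Proof. move=> hu hv h; nra. Qed.

Lemma key_ineq {R : rcfType} (x r sn sm T : R) :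
  2 <= x -> 2 <= r -> r ^+ 2 = 2 * r + 1 -> 0 <= sn -> 0 <= sm -> 0 < T ->
  sn * Num.sqrt (2 * x + 1) <= r * T -> sm * Num.sqrt (2 * x - 1) <= T ->
  ((2 * x + 1) * sn + x * sm) * Num.sqrt (2 * x + 3) <= (x + 1) * r ^+ 2 * T.
Proof.
move=> hx hr hr2 hsn hsm hT h1 h2.
set a := Num.sqrt (2 * x + 1); set b := Num.sqrt (2 * x - 1); set c := Num.sqrt (2 * x + 3).
have ha : a ^+ 2 = 2 * x + 1 by rewrite sqr_sqrtr //; lra.
have hb : b ^+ 2 = 2 * x - 1 by rewrite sqr_sqrtr //; lra.
have hc : c ^+ 2 = 2 * x + 3 by rewrite sqr_sqrtr //; lra.
have a0 : 0 <= a by rewrite sqrtr_ge0.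
have b0 : 0 <= b by rewrite sqrtr_ge0.
have c0 : 0 <= c by rewrite sqrtr_ge0.
have x1 : x + 1 != 0 by apply: lt0r_neq0; lra.
have d1 : 2 * x - 1 != 0 by apply: lt0r_neq0; lra.
set al : R := 2 * x + 2 - (4 * (x + 1))^-1.
set be : R := (4 * x ^+ 2 - 2) / (2 * x - 1) ^+ 2.
have al0 : 0 <= al.
  rewrite /al subr_ge0 (le_trans _ (_ : 1 <= 2 * x + 2)) //; last by lra.
  by rewrite invf_le1; lra.
have be0 : 0 <= be.
  by rewrite /be divr_ge0 ?sqr_ge0 //; nra.
have hac : a * c <= al.
  apply: sq_le => //; first exact: mulr_ge0.
  rewrite exprMn ha hc -subr_ge0.
  have -> : al ^+ 2 - (2 * x + 1) * (2 * x + 3) = ((4 * (x + 1)) ^+ 2)^-1 :> R.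
    by rewrite /al; field; rewrite x1.
  by rewrite invr_ge0 sqr_ge0.
have hcb : c <= be * b.
  apply: sq_le => //; first exact: mulr_ge0.
  rewrite exprMn hb hc -subr_ge0.
  have -> : be ^+ 2 * (2 * x - 1) - (2 * x + 3) =
     (8 * x ^+ 2 - 16 * x + 7) / (2 * x - 1) ^+ 3 :> R.
    by rewrite /be; field; rewrite d1.
  by rewrite divr_ge0 //; [nra | rewrite exprn_ge0 //; lra].
have k3 : r * al + x * be <= (x + 1) * r ^+ 2.
  rewrite -subr_ge0.
  have -> : (x + 1) * r ^+ 2 - (r * al + x * be) =
     (r * (2 * x - 1) ^+ 2 - 4 * (x ^+ 2 - 1)) / (4 * (x + 1) * (2 * x - 1) ^+ 2) :> R.
    by rewrite /al /be hr2; field; rewrite x1 d1.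
  have s0 : 0 <= (2 * x - 1) ^+ 2 by rewrite sqr_ge0.
  have r2 : 0 <= r - 2 by lra.
  have := mulr_ge0 r2 s0.
  move=> h; rewrite divr_ge0 //; first by nra.
  by rewrite mulr_ge0 // mulr_ge0 //; lra.
have e1 : (2 * x + 1) * sn * c = (sn * a) * (a * c) by rewrite -ha; ring.
have e2 : sn * a * (a * c) <= r * T * al.
  by apply: ler_pM => //; [exact: mulr_ge0 | exact: mulr_ge0].
have e3 : x * sm * c <= x * be * T.
  have : sm * c <= be * T.
    apply: (le_trans (ler_wpM2l hsm hcb)).
    by rewrite mulrCA ler_wpM2l.
  by move=> h; rewrite -mulrA -[X in _ <= X]mulrA ler_wpM2l //; lra.
rewrite mulrDl e1.
apply: (le_trans (lerD e2 e3)).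
have -> : r * T * al + x * be * T = (r * al + x * be) * T by ring.
by rewrite ler_wpM2r //; lra.
Qed.

Definition norm1 {R : rcfType} (p : {poly R}) := \sum_(i < size p) `|p`_i|.

Lemma norm1_wide {R : rcfType} n (p : {poly R}) : (size p <= n)%N ->
  norm1 p = \sum_(i < n) `|p`_i|.
Proof.
move=> hn; rewrite /norm1 -(subnKC hn) big_split_ord /=.
rewrite [X in _ + X]big1 ?addr0 // => i _.
by rewrite (leq_sizeP _ _ (leqnn _)) ?normr0 // leq_addr.
Qed.

Lemma norm1_ge0 {R : rcfType} (p : {poly R}) : 0 <= norm1 p.
Proof. by apply: sumr_ge0 => i _. Qed.

Lemma norm1D {R : rcfType} (p q : {poly R}) : norm1 (p + q) <= norm1 p + norm1 q.
Proof.
pose n := maxn (size p) (size q).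
rewrite (@norm1_wide _ n) ?size_polyD // (@norm1_wide _ n p) ?leq_maxl //.
rewrite (@norm1_wide _ n q) ?leq_maxr // -big_split /=.
by apply: ler_sum => i _; rewrite coefD ler_normD.
Qed.

Lemma norm1Z {R : rcfType} (c : R) (p : {poly R}) : norm1 (c *: p) = `|c| * norm1 p.
Proof.
rewrite (@norm1_wide _ (size p)) ?size_scale_leq // /norm1 mulr_sumr.
by apply: eq_bigr => i _; rewrite coefZ normrM.
Qed.

Lemma norm1MX {R : rcfType} (p : {poly R}) : norm1 (p * 'X) = norm1 p.
Proof.
rewrite (@norm1_wide _ (size p).+1); last first.
  by apply/leq_sizeP => j hj; rewrite coefMX; case: j hj => // j hj; rewrite /= (leq_sizeP _ _ (leqnn _)).
rewrite big_ord_recl coefMX /= normr0 add0r /norm1; apply: eq_bigr => i _.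
by rewrite coefMX.
Qed.

Lemma norm1_rec {R : rcfType} n : norm1 (P (R:=R) n.+2) <=
  (n.+2%:R)^-1 * ((2 * n + 3)%:R * norm1 (P (R:=R) n.+1) + n.+1%:R * norm1 (P (R:=R) n)).
Proof.
rewrite Prec norm1Z ger0_norm ?invr_ge0 ?ler0n // ler_wpM2l ?invr_ge0 ?ler0n //.
apply: (le_trans (norm1D _ _)).
by rewrite -scaleN1r !norm1Z norm1MX normrN1 mul1r !ger0_norm ?ler0n.
Qed.

Definition rr {R : rcfType} : R := 1 + Num.sqrt 2.

Lemma sqrt2_ge1 {R : rcfType} : 1 <= Num.sqrt (2 : R).
Proof.
apply: sq_le; rewrite ?ler01 ?sqrtr_ge0 //.
by rewrite sqr_sqrtr ?expr1n //; lra.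
Qed.

Lemma rr_ge2 {R : rcfType} : 2 <= (rr : R).
Proof. by have := @sqrt2_ge1 R; rewrite /rr; lra. Qed.

Lemma rr_sq {R : rcfType} : (rr : R) ^+ 2 = 2 * rr + 1.
Proof.
have h : Num.sqrt (2 : R) ^+ 2 = 2 by rewrite sqr_sqrtr //; lra.
by rewrite /rr; rewrite sqrrD h expr1n; ring.
Qed.

Lemma Pnorm1_bound {R : rcfType} n :
  norm1 (P (R:=R) n) * Num.sqrt (2 * n%:R + 1) <= rr ^+ n.
Proof.
have r2 := @rr_ge2 R; have rs := @rr_sq R.
have s0 : norm1 (P (R:=R) 0) = 1.
  by rewrite P0 /norm1 size_poly1 big_ord1 coefC /= normr1.
have s1 : norm1 (P (R:=R) 1) = 1.
  by rewrite P1 -[X in norm1 X]mul1r norm1MX -P0 s0.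
have s2 : norm1 (P (R:=R) 2) <= 2.
  apply: (le_trans (norm1_rec 0)); rewrite s0 s1; lra.
have B0 : norm1 (P (R:=R) 0) * Num.sqrt (2 * 0%:R + 1) <= rr ^+ 0.
  by rewrite s0 mulr0 add0r sqrtr1 mulr1 expr0.
have B1 : norm1 (P (R:=R) 1) * Num.sqrt (2 * 1%:R + 1) <= rr ^+ 1.
  rewrite s1 mul1r expr1; apply: sq_le; rewrite ?sqrtr_ge0 //; first lra.
  rewrite sqr_sqrtr; lra.
have B2 : norm1 (P (R:=R) 2) * Num.sqrt (2 * 2%:R + 1) <= rr ^+ 2.
  have q0 : 0 <= Num.sqrt (2 * 2%:R + 1 : R) by rewrite sqrtr_ge0.
  apply: (le_trans (ler_wpM2r q0 s2)).
  have r0 : 0 <= (rr : R) ^+ 2 by rewrite rs; lra.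
  have t0 : (0 : R) <= 2 * Num.sqrt (2 * 2%:R + 1) by rewrite mulr_ge0 // ler0n.
  apply: (sq_le t0 r0).
  rewrite exprMn sqr_sqrtr; last lra.
  rewrite rs; nra.
suff : forall m, (m <= n)%N ->
  norm1 (P (R:=R) m) * Num.sqrt (2 * m%:R + 1) <= rr ^+ m by apply.
elim: n => [|n IH] m hm.
  by move: hm; rewrite leqn0 => /eqP ->.
case: (ltnP m n.+1) => hmn; first by apply: IH.
have -> : m = n.+1 by apply/eqP; rewrite eqn_leq hm.
case: n IH {hm hmn} => [|[|N]] IH //.
have hA := IH N.+2 (leqnn _).
have hB := IH N.+1 (leqnSn _).
set x : R := N.+2%:R.
have hx : 2 <= x by rewrite /x ler_nat.
have ex1 : (N.+2%:R : R) = x by [].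
have ex2 : (N.+1%:R : R) = x - 1 by rewrite /x -natr1; ring.
have ex3 : (N.+3%:R : R) = x + 1 by rewrite /x -natr1.
have rpos : 0 < (rr : R) by lra.
have key := key_ineq hx r2 rs (norm1_ge0 (P N.+2)) (norm1_ge0 (P N.+1))
   (exprn_gt0 N.+1 rpos).
rewrite -exprS in key.
have e2 : 2 * N.+1%:R + 1 = 2 * x - 1 :> R by rewrite ex2; ring.
rewrite e2 in hB.
have {key} key := key hA hB.
have e3 : 2 * N.+3%:R + 1 = 2 * x + 3 :> R by rewrite ex3; ring.
rewrite e3.
have hr := norm1_rec (R:=R) N.+1.
have e4 : (2 * N.+1 + 3)%:R = 2 * x + 1 :> R by rewrite /x; ring.
rewrite e4 ex3 in hr.
have c0 : 0 <= Num.sqrt (2 * x + 3) by rewrite sqrtr_ge0.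
apply: (le_trans (ler_wpM2r c0 hr)).
rewrite -mulrA (le_trans (ler_wpM2l _ key)) ?invr_ge0 //; first lra.
rewrite !mulrA mulVf ?mul1r; last by apply: lt0r_neq0; lra.
by rewrite -mulrA -!exprS lexx.
Qed.


Lemma cs_step {R : rcfType} (S A B u v : R) : 0 <= A -> 0 <= B -> S ^+ 2 <= A * B ->
  2 * S * u * v <= A * v ^+ 2 + B * u ^+ 2.
Proof.
move=> hA hB hS.
have h1 : (2 * S * u * v) ^+ 2 <= (A * v ^+ 2 + B * u ^+ 2) ^+ 2.
  have e : (A * v ^+ 2 + B * u ^+ 2) ^+ 2 = (A * v ^+ 2 - B * u ^+ 2) ^+ 2 + 4 * (A * B) * (u * v) ^+ 2 by ring.
  have e2 : (2 * S * u * v) ^+ 2 = 4 * S ^+ 2 * (u * v) ^+ 2 by ring.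
  rewrite e e2.
  have : 4 * S ^+ 2 * (u * v) ^+ 2 <= 4 * (A * B) * (u * v) ^+ 2.
    by rewrite ler_wpM2r ?sqr_ge0 // ler_wpM2l.
  have := sqr_ge0 (A * v ^+ 2 - B * u ^+ 2); lra.
have h2 : 0 <= A * v ^+ 2 + B * u ^+ 2 by rewrite addr_ge0 // mulr_ge0 // sqr_ge0.
apply: (le_trans (ler_norm _)); apply: sq_le; rewrite ?normr_ge0 //.
by rewrite real_normK // num_real.
Qed.

Lemma CS {R : rcfType} n (u v : nat -> R) :
  (\sum_(i < n) u i * v i) ^+ 2 <= (\sum_(i < n) u i ^+ 2) * (\sum_(i < n) v i ^+ 2).
Proof.
elim: n => [|n IH]; first by rewrite !big_ord0 expr0n mul0r.
rewrite !big_ord_recr /=.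
set S := \sum_(i < n) u i * v i; set A := \sum_(i < n) u i ^+ 2; set B := \sum_(i < n) v i ^+ 2.
have hA : 0 <= A by apply: sumr_ge0 => i _; apply: sqr_ge0.
have hB : 0 <= B by apply: sumr_ge0 => i _; apply: sqr_ge0.
have := cs_step (u n) (v n) hA hB IH.
have e1 : (S + u n * v n) ^+ 2 = S ^+ 2 + 2 * S * u n * v n + (u n * v n) ^+ 2 by ring.
have e2 : (A + u n ^+ 2) * (B + v n ^+ 2) = A * B + (A * v n ^+ 2 + B * u n ^+ 2) + (u n * v n) ^+ 2 by ring.
have IH2 : S ^+ 2 <= A * B := IH.
rewrite e1 e2 => h.
have h3 : 2 * S * u n * v n <= A * v n ^+ 2 + B * u n ^+ 2 := h.
lra.
Qed.

Lemma WCS {R : rcfType} n (x y w wi : nat -> R) :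
  (forall j, 0 <= w j) -> (forall j, 0 <= wi j) -> (forall j, w j * wi j = 1) ->
  (\sum_(j < n) x j * y j) ^+ 2 <=
    (\sum_(j < n) w j * x j ^+ 2) * (\sum_(j < n) wi j * y j ^+ 2).
Proof.
move=> hw hwi hww.
have := CS n (fun j => Num.sqrt (w j) * x j) (fun j => Num.sqrt (wi j) * y j).
have e1 : forall j : 'I_n, Num.sqrt (w j) * x j * (Num.sqrt (wi j) * y j) = x j * y j.
  move=> j; have -> : Num.sqrt (w j) * x j * (Num.sqrt (wi j) * y j) =
    Num.sqrt (w j * wi j) * (x j * y j) by rewrite sqrtrM //; ring.
  by rewrite hww sqrtr1 mul1r.
have e2 : forall (z : nat -> R) j, 0 <= z j -> forall t, (Num.sqrt (z j) * t) ^+ 2 = z j * t ^+ 2.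
  by move=> z j hz t; rewrite exprMn sqr_sqrtr.
rewrite (eq_bigr _ (fun j _ => e1 j)).
rewrite (eq_bigr _ (fun (j : 'I_n) _ => e2 w j (hw j) (x j))).
by rewrite (eq_bigr _ (fun (j : 'I_n) _ => e2 wi j (hwi j) (y j))).
Qed.

Lemma sq_sum_le {R : rcfType} n (x : nat -> R) : (forall i, 0 <= x i) ->
  \sum_(i < n) x i ^+ 2 <= (\sum_(i < n) x i) ^+ 2.
Proof.
move=> hx; elim: n => [|n IH]; first by rewrite !big_ord0 expr0n.
rewrite !big_ord_recr /=.
have h0 : 0 <= \sum_(i < n) x i by apply: sumr_ge0.
have := hx n; nra.
Qed.

Lemma LfXn {R : rcfType} n : Lf ('X^n : {poly R}) = mom n.
Proof.
rewrite /Lf size_polyXn big_ord_recr /= coefXn eqxx mul1r big1 ?add0r // => i _.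
by rewrite coefXn (ltn_eqF (ltn_ord i)) mul0r.
Qed.

Lemma Lf_quad {R : rcfType} N (v : nat -> R) :
  Lf (\poly_(i < N) v i * \poly_(i < N) v i) =
  \sum_(k < N) \sum_(l < N) v k * v l * mom (k + l).
Proof.
rewrite poly_def mulr_suml Lf_sum; apply: eq_bigr => k _.
rewrite mulr_sumr Lf_sum; apply: eq_bigr => l _.
by rewrite -scalerAl -scalerAr !LfZ -exprD LfXn mulrA.
Qed.

Lemma span {R : rcfType} N (p : {poly R}) : (size p <= N)%N ->
  exists a : nat -> R, p = \sum_(j < N) a j *: P j.
Proof.
elim: N p => [|N IH] p hp.
  exists (fun _ => 0); rewrite big_ord0.
  by apply/eqP; rewrite -size_poly_eq0 -leqn0.
have lz : lead_coef (P (R:=R) N) != 0 by apply: lt0r_neq0; apply: Plead_gt0.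
set c := p`_N / lead_coef (P (R:=R) N).
have hq : (size (p - c *: P N)%R <= N)%N.
  apply/leq_sizeP => j hj; rewrite coefB coefZ.
  case: (ltngtP N j) hj => // [hNj | <-] _.
    by rewrite !(leq_sizeP _ _ (leqnn _)) ?mulr0 ?subr0 // ?Psize // (leq_trans hp).
  have e : (P (R:=R) N)`_N = lead_coef (P (R:=R) N) by rewrite lead_coefE Psize.
  by rewrite e divfK // subrr.
have [a ha] := IH _ hq.
exists (fun j => if j == N then c else a j).
rewrite big_ord_recr /= eqxx.
have -> : \sum_(i < N) (if nat_of_ord i == N then c else a i) *: P (R:=R) i =
          \sum_(i < N) a i *: P i.
  by apply: eq_bigr => i _; rewrite (ltn_eqF (ltn_ord i)).
by rewrite -ha subrK.
Qed.

Lemma Lf_comb {R : rcfType} N (a : nat -> R) :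
  Lf ((\sum_(j < N) a j *: P (R:=R) j) * (\sum_(j < N) a j *: P (R:=R) j)) =
  \sum_(j < N) a j ^+ 2 * Lf (P (R:=R) j * P j).
Proof.
rewrite mulr_suml Lf_sum; apply: eq_bigr => i _.
rewrite mulr_sumr Lf_sum (bigD1 i) //= big1 ?addr0.
  by rewrite -scalerAl -scalerAr !LfZ mulrA.
move=> j hji; rewrite -scalerAl -scalerAr !LfZ.
case: (ltngtP i j) => [hij | hji' | e].
- by rewrite Porth ?mulr0.
- by rewrite [X in Lf X]mulrC Porth ?mulr0.
- by move: hji; rewrite (val_inj e) eqxx.
Qed.

Lemma geom_le {R : rcfType} (g : R) N : 2 <= g -> \sum_(j < N) g ^+ j <= g ^+ N.
Proof.
move=> hg; elim: N => [|N IH]; first by rewrite big_ord0 expr0 ler01.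
rewrite big_ord_recr /= exprS.
have : 1 <= g ^+ N by apply: exprn_ege1; lra.
have h0 : 0 <= g ^+ N by rewrite exprn_ge0 //; lra.
nra.
Qed.

Lemma hP_pos {R : rcfType} j : 0 < Lf (P (R:=R) j * P j).
Proof.
have h := Pnorm (R:=R) j.
have : 0 < (2 * j + 1)%:R * Lf (P (R:=R) j * P j) by rewrite h ltr01.
by rewrite pmulr_rgt0 // ltr0n addn1.
Qed.

Lemma coef_sq_bound {R : rcfType} N j : (j < N)%N ->
  (2 * j + 1)%:R * \sum_(k < N) ((P (R:=R) j)`_k) ^+ 2 <= (rr ^+ 2) ^+ j.
Proof.
move=> hj.
have e : norm1 (P (R:=R) j) = \sum_(k < N) `|(P (R:=R) j)`_k|.
  by apply: norm1_wide; rewrite Psize.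
have h1 : \sum_(k < N) ((P (R:=R) j)`_k) ^+ 2 <= norm1 (P (R:=R) j) ^+ 2.
  have hs := @sq_sum_le R N (fun k => `|(P (R:=R) j)`_k|) (fun _ => normr_ge0 _).
  rewrite /= in hs; rewrite e; apply: (le_trans _ hs).
  by apply: ler_sum => k _; rewrite real_normK ?num_real.
have hb := Pnorm1_bound (R:=R) j.
have h2 : (2 * j + 1)%:R * norm1 (P (R:=R) j) ^+ 2 <= (rr ^+ 2) ^+ j.
  have -> : (2 * j + 1)%:R * norm1 (P (R:=R) j) ^+ 2 =
     (norm1 (P (R:=R) j) * Num.sqrt (2 * j%:R + 1)) ^+ 2.
    rewrite exprMn sqr_sqrtr; last by rewrite addr_ge0 ?mulr_ge0 ?ler0n.
    by rewrite natrD natrM mulrC.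
  rewrite -exprM mulnC exprM; apply: lerXn2r => //.
  - by rewrite nnegrE mulr_ge0 ?norm1_ge0 ?sqrtr_ge0.
  - by rewrite nnegrE exprn_ge0 //; have := @rr_ge2 R; lra.
by apply: le_trans h2; rewrite ler_wpM2l.
Qed.

Lemma cont_bound {R : rcfType} N (v : nat -> R) :
  \sum_(k < N) v k ^+ 2 <=
  (rr ^+ 2) ^+ N * \sum_(k < N) \sum_(l < N) v k * v l * mom (k + l).
Proof.
rewrite -Lf_quad.
set p := \poly_(i < N) v i.
have [a ha] := span (size_poly N v).
rewrite -/p in ha.
rewrite ha Lf_comb.
set h := fun j => Lf (P (R:=R) j * P j).
set wi := fun j : nat => ((2 * j + 1)%:R : R).
have vk : forall k : 'I_N, v k = \sum_(j < N) a j * (P (R:=R) j)`_k.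
  move=> k; have := congr1 (fun q : {poly R} => q`_k) ha.
  rewrite /p coef_poly ltn_ord => ->.
  by rewrite coef_sum; apply: eq_bigr => j _; rewrite coefZ.
have step : \sum_(k < N) v k ^+ 2 <=
   \sum_(k < N) ((\sum_(j < N) h j * a j ^+ 2) * (\sum_(j < N) wi j * ((P (R:=R) j)`_k) ^+ 2)).
  apply: ler_sum => k _; rewrite vk.
  apply: (@WCS R N a (fun j => (P (R:=R) j)`_k) h wi) => j.
  - exact: ltW (hP_pos j).
  - by rewrite /wi ler0n.
  - by rewrite /h /wi mulrC Pnorm.
apply: (le_trans step).
rewrite -mulr_sumr exchange_big /=.
have -> : \sum_(j < N) a j ^+ 2 * Lf (P (R:=R) j * P j) = \sum_(j < N) h j * a j ^+ 2.
  by apply: eq_bigr => j _; rewrite mulrC.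
rewrite mulrC ler_wpM2r //.
  by apply: sumr_ge0 => j _; rewrite mulr_ge0 ?sqr_ge0 // ltW // hP_pos.
apply: le_trans (geom_le N _); last by have := @rr_ge2 R; nra.
apply: ler_sum => j _; rewrite -mulr_sumr.
exact: coef_sq_bound.
Qed.


Lemma pow_lip {R : rcfType} k (u w : R) : `|u| <= 1 -> `|w| <= 1 ->
  `|u ^+ k - w ^+ k| <= k%:R * `|u - w|.
Proof.
move=> hu hw; elim: k => [|k IH]; first by rewrite !expr0 subrr normr0 mul0r.
have e : u ^+ k.+1 - w ^+ k.+1 = u * (u ^+ k - w ^+ k) + w ^+ k * (u - w).
  by rewrite !exprS; ring.
rewrite e (le_trans (ler_normD _ _)) // !normrM.
have h1 : `|u| * `|u ^+ k - w ^+ k| <= k%:R * `|u - w|.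
  apply: le_trans IH; rewrite -[X in _ <= X]mul1r ler_wpM2r //.
have h2 : `|w ^+ k| * `|u - w| <= `|u - w|.
  rewrite -[X in _ <= X]mul1r ler_wpM2r // normrX exprn_ile1 //.
rewrite -natr1 mulrDl mul1r; exact: lerD.
Qed.

Lemma mixed_lip {R : rcfType} n i (a x b : R) : (i <= n)%N ->
  -1 <= a -> a <= x -> x <= b -> b <= 1 ->
  `|x ^+ n - b ^+ (n - i) * a ^+ i| <= n%:R * (b - a).
Proof.
move=> hi ha hax hxb hb.
have nx : `|x| <= 1 by rewrite ler_norml; lra.
have na : `|a| <= 1 by rewrite ler_norml; lra.
have nb : `|b| <= 1 by rewrite ler_norml; lra.
have e : x ^+ n - b ^+ (n - i) * a ^+ i =
   (x ^+ (n - i) - b ^+ (n - i)) * x ^+ i + b ^+ (n - i) * (x ^+ i - a ^+ i).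
  by rewrite -{1}(subnK hi) exprD; ring.
rewrite e (le_trans (ler_normD _ _)) // !normrM.
have h1 : `|x ^+ (n - i) - b ^+ (n - i)| * `|x ^+ i| <= (n - i)%:R * (b - a).
  apply: le_trans (_ : `|x ^+ (n - i) - b ^+ (n - i)| <= _).
    by rewrite -[X in _ <= X]mulr1 ler_wpM2l // normrX exprn_ile1.
  apply: (le_trans (pow_lip _ nx nb)); rewrite ler_wpM2l //.
  by rewrite distrC ger0_norm; lra.
have h2 : `|b ^+ (n - i)| * `|x ^+ i - a ^+ i| <= i%:R * (b - a).
  apply: le_trans (_ : `|x ^+ i - a ^+ i| <= _).
    by rewrite -[X in _ <= X]mul1r ler_wpM2r // normrX exprn_ile1.
  apply: (le_trans (pow_lip _ nx na)); rewrite ler_wpM2l //.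
  by rewrite ger0_norm; lra.
by apply: le_trans (lerD h1 h2) _; rewrite -mulrDl -natrD subnK.
Qed.

Definition ag {R : rcfType} (M m : nat) : R := -1 + 2 * m%:R / M%:R.
Definition xp {R : rcfType} (M : nat) (d : R) (m : nat) : R := -1 + d + 2 * m%:R / M%:R.
Definition Sm {R : rcfType} (M : nat) (d : R) (n : nat) : R :=
  M%:R^-1 * \sum_(m < M) xp M d m ^+ n.

Lemma mom_tele {R : rcfType} M n : (0 < M)%N ->
  n.+1%:R * mom n = M%:R^-1 * \sum_(m < M)
     \sum_(i < n.+1) ag (R:=R) M m.+1 ^+ (n - i) * ag M m ^+ i.
Proof.
move=> hM.
have M0 : (M%:R : R) != 0 by rewrite pnatr_eq0 -lt0n.
rewrite mom_deriv.
have aM : ag (R:=R) M M = 1 by rewrite /ag mulfK //; lra.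
have a0 : ag (R:=R) M 0 = -1 by rewrite /ag mulr0 mul0r addr0.
have e1 : \sum_(m < M) (ag (R:=R) M m.+1 ^+ n.+1 - ag M m ^+ n.+1) = 1 - (-1) ^+ n.+1.
  have t := telescope_sumr (fun m => ag (R:=R) M m ^+ n.+1) (leq0n M).
  by rewrite big_mkord in t; rewrite t aM a0 expr1n.
have e2 : forall m : 'I_M, ag (R:=R) M m.+1 ^+ n.+1 - ag M m ^+ n.+1 =
    2 / M%:R * \sum_(i < n.+1) ag (R:=R) M m.+1 ^+ (n - i) * ag M m ^+ i.
  move=> m; rewrite subrXX /=; congr (_ * _).
  by rewrite /ag -natr1; field.
rewrite -e1 (eq_bigr _ (fun m _ => e2 m)) -mulr_sumr; field.
by rewrite M0.
Qed.

Lemma Sbound {R : rcfType} M (d : R) n : (0 < M)%N -> 0 <= d -> d <= 2 / M%:R ->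
  `|Sm M d n - mom n| <= 2 * n%:R / M%:R.
Proof.
move=> hM hd0 hd1.
have M0 : (M%:R : R) != 0 by rewrite pnatr_eq0 -lt0n.
have Mp : (0 : R) < M%:R by rewrite ltr0n.
have n0 : (n.+1%:R : R) != 0 by rewrite pnatr_eq0.
set T := fun m : nat => \sum_(i < n.+1) ag (R:=R) M m.+1 ^+ (n - i) * ag M m ^+ i.
have hmom : mom n = M%:R^-1 * \sum_(m < M) (n.+1%:R^-1 * T m).
  apply: (@cancel_nat R n); rewrite (@mom_tele R M n hM) -mulr_sumr.
  by rewrite /T; field; rewrite M0 andbT addrC natr1.
have hdiff : Sm M d n - mom n = M%:R^-1 * \sum_(m < M) (n.+1%:R^-1 *
    \sum_(i < n.+1) (xp M d m ^+ n - ag M m.+1 ^+ (n - i) * ag M m ^+ i)).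
  rewrite hmom /Sm -mulrBr -sumrB; congr (_ * _); apply: eq_bigr => m _.
  rewrite sumrB sumr_const card_ord /T -mulr_natr; field.
  by rewrite addrC natr1.
rewrite hdiff normrM ger0_norm ?invr_ge0 ?ler0n //.
have hterm : forall m : 'I_M, `|n.+1%:R^-1 *
    \sum_(i < n.+1) (xp M d m ^+ n - ag M m.+1 ^+ (n - i) * ag M m ^+ i)| <= n%:R * (2 / M%:R).
  move=> m; rewrite normrM ger0_norm ?invr_ge0 ?ler0n //.
  apply: (le_trans (ler_wpM2l _ (ler_norm_sum _ _ _))); first by rewrite invr_ge0 ler0n.
  have hi : forall i : 'I_n.+1, `|xp M d m ^+ n - ag M m.+1 ^+ (n - i) * ag M m ^+ i| <= n%:R * (2 / M%:R).
    move=> i.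
    have hm : (m < M)%N := ltn_ord m.
    have hmM : (m.+1%:R : R) <= M%:R by rewrite ler_nat.
    have hm0 : (0 : R) <= m%:R by rewrite ler0n.
    have ba : ag (R:=R) M m.+1 - ag M m = 2 / M%:R by rewrite /ag -natr1; field.
    rewrite -ba; apply: mixed_lip; first by rewrite -ltnS.
    - have : (0:R) <= 2 * m%:R / M%:R by rewrite divr_ge0 ?mulr_ge0 ?ler0n.
      by rewrite /ag; lra.
    - by rewrite /xp /ag; lra.
    - rewrite /xp /ag.
      have e : 2 * m.+1%:R / M%:R = 2 * m%:R / M%:R + 2 / M%:R :> R.
        by rewrite -[m.+1]addn1 natrD; ring.
      rewrite e; lra.
    - rewrite /ag -subr_ge0.
      have -> : 1 - (-1 + 2 * m.+1%:R / M%:R) = 2 * (M%:R - m.+1%:R) / M%:R :> R by field.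
      by rewrite mulr_ge0 ?invr_ge0 ?ler0n // mulr_ge0 //; lra.
  apply: le_trans (_ : n.+1%:R^-1 * \sum_(i < n.+1) (n%:R * (2 / M%:R)) <= _).
    by rewrite ler_wpM2l ?invr_ge0 ?ler0n // ler_sum // => i _; apply: hi.
  by rewrite sumr_const card_ord -(mulr_natl (n%:R * (2 / M%:R))) mulKf.
apply: le_trans (_ : M%:R^-1 * \sum_(m < M) (n%:R * (2 / M%:R)) <= _).
  rewrite ler_wpM2l ?invr_ge0 ?ler0n //.
  apply: (le_trans (ler_norm_sum _ _ _)).
  by apply: ler_sum => m _; apply: hterm.
rewrite sumr_const card_ord -(mulr_natl (n%:R * (2 / M%:R))) mulKf //.
by rewrite mulrA [n%:R * 2]mulrC.
Qed.


Lemma l1_l2 {R : rcfType} N (v : nat -> R) :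
  (\sum_(k < N) `|v k|) ^+ 2 <= N%:R * \sum_(k < N) v k ^+ 2.
Proof.
have := CS N (fun _ => 1) (fun k => `|v k|).
rewrite /=.
have -> : \sum_(i < N) 1 * `|v i| = \sum_(k < N) `|v k| by apply: eq_bigr => i _; rewrite mul1r.
have -> : \sum_(i < N) (1 : R) ^+ 2 = N%:R by rewrite sumr_const card_ord expr1n.
have -> : \sum_(i < N) `|v i| ^+ 2 = \sum_(k < N) v k ^+ 2.
  by apply: eq_bigr => i _; rewrite real_normK ?num_real.
done.
Qed.

Lemma disc_bound {R : rcfType} M (d : R) N (v : nat -> R) :
  (0 < M)%N -> 0 <= d -> d <= 2 / M%:R ->
  8 * N%:R ^+ 2 * ((rr : R) ^+ 2) ^+ N <= M%:R ->
  \sum_(k < N) v k ^+ 2 <= 2 * ((rr : R) ^+ 2) ^+ N *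
     \sum_(k < N) \sum_(l < N) v k * v l * (M%:R^-1 * \sum_(m < M) xp M d m ^+ k * xp M d m ^+ l).
Proof.
move=> hM hd0 hd1 hC.
set g := (rr : R) ^+ 2.
have g0 : 0 < g ^+ N by rewrite exprn_gt0 // /g; have := @rr_ge2 R; nra.
have Mp : (0 : R) < M%:R by rewrite ltr0n.
set V := \sum_(k < N) v k ^+ 2.
have V0 : 0 <= V by apply: sumr_ge0 => i _; apply: sqr_ge0.
set C := \sum_(k < N) \sum_(l < N) v k * v l * mom (k + l).
set D := \sum_(k < N) \sum_(l < N) v k * v l * (M%:R^-1 * \sum_(m < M) xp M d m ^+ k * xp M d m ^+ l).
have hc : V <= g ^+ N * C := cont_bound N v.
have eD : D = \sum_(k < N) \sum_(l < N) v k * v l * Sm M d (k + l).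
  apply: eq_bigr => k _; apply: eq_bigr => l _; congr (_ * (_ * _)).
  by apply: eq_bigr => m _; rewrite exprD.
have hdiff : `|D - C| <= 4 * N%:R ^+ 2 / M%:R * V.
  rewrite eD -sumrB.
  apply: (le_trans (ler_norm_sum _ _ _)).
  apply: le_trans (_ : \sum_(k < N) \sum_(l < N) `|v k| * `|v l| * (4 * N%:R / M%:R) <= _).
    apply: ler_sum => k _; rewrite -sumrB.
    apply: (le_trans (ler_norm_sum _ _ _)).
    apply: ler_sum => l _.
    rewrite -mulrBr normrM normrM ler_wpM2l ?mulr_ge0 //.
    apply: (le_trans (Sbound (k + l) hM hd0 hd1)).
    rewrite ler_wpM2r ?invr_ge0 ?ler0n //.
    have : ((k + l)%N%:R : R) <= 2 * N%:R.
      by rewrite -natrM ler_nat; have := ltn_ord k; have := ltn_ord l; lia.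
    lra.
  have -> : \sum_(k < N) \sum_(l < N) `|v k| * `|v l| * (4 * N%:R / M%:R) =
    4 * N%:R / M%:R * (\sum_(k < N) `|v k|) ^+ 2.
    rewrite expr2 mulr_suml mulr_sumr; apply: eq_bigr => k _.
    rewrite mulr_sumr mulr_sumr; apply: eq_bigr => l _; ring.
  have := l1_l2 N v; rewrite -/V => h.
  have -> : 4 * N%:R ^+ 2 / M%:R * V = 4 * N%:R / M%:R * (N%:R * V) by ring.
  by rewrite ler_wpM2l // divr_ge0 ?mulr_ge0 ?ler0n.
have hCD : C <= D + 4 * N%:R ^+ 2 / M%:R * V.
  have := ler_norm (C - D); rewrite distrC => h; lra.
have h2 : g ^+ N * (4 * N%:R ^+ 2 / M%:R * V) <= V / 2.
  have A1 : (8 * N%:R ^+ 2 * g ^+ N) / M%:R <= 1 by rewrite ler_pdivrMr // mul1r.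
  have -> : g ^+ N * (4 * N%:R ^+ 2 / M%:R * V) = (8 * N%:R ^+ 2 * g ^+ N) / M%:R * V / 2.
    by field; rewrite lt0r_neq0.
  set A := (8 * N%:R ^+ 2 * g ^+ N) / M%:R in A1 *.
  have : A * V <= V by nra.
  lra.
have : V <= g ^+ N * D + V / 2.
  have h3 := ler_wpM2l (ltW g0) hCD; rewrite mulrDr in h3; lra.
lra.
Qed.


Definition ext {R : realType} N (f : 'I_N -> R) (k : nat) : R :=
  if insub k is Some i then f i else 0.

Lemma ext_ord {R : realType} N (f : 'I_N -> R) (i : 'I_N) : ext f i = f i.
Proof. by rewrite /ext valK. Qed.

Lemma ext_out {R : realType} N (f : 'I_N -> R) k : (N <= k)%N -> ext f k = 0.
Proof. by move=> h; rewrite /ext insubN // -leqNgt. Qed.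

Lemma final_ineq {R : realType} (Y P U c : R) : 0 <= Y -> 0 <= U -> 0 < c ->
  Y <= c * P -> P ^+ 2 <= Y * U -> Y <= c ^+ 2 * U.
Proof.
move=> hY hU hc h1 h2.
have hP : 0 <= P by nra.
have h3 : Y ^+ 2 <= c ^+ 2 * P ^+ 2.
  rewrite -exprMn; apply: lerXn2r; rewrite ?nnegrE //; exact: mulr_ge0 (ltW hc) hP.
have h4 : Y ^+ 2 <= c ^+ 2 * (Y * U) by apply: (le_trans h3); rewrite ler_wpM2l ?sqr_ge0.
case: (ltrgt0P Y) hY => [hY0|//|->] _; last by rewrite mulr_ge0 ?sqr_ge0.
have : Y * Y <= Y * (c ^+ 2 * U) by rewrite -expr2 (le_trans h4) // mulrCA.
by rewrite ler_pM2l.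
Qed.

Lemma key_quad {R : realType} N M (d : R) (y : 'I_N -> R) :
  (0 < M)%N -> 0 <= d -> d <= 2 / M%:R ->
  8 * N%:R ^+ 2 * gamma R ^+ N <= M%:R ->
  \sum_(i < N) y i ^+ 2 <= 2 * gamma R ^+ N *
     \sum_(i < N) \sum_(j < N) y i * y j * hatH N M d i j.
Proof.
move=> hM hd0 hd1 hC.
have := @disc_bound R M d N (ext y) hM hd0 hd1 hC.
have e1 : \sum_(k < N) ext y k ^+ 2 = \sum_(i < N) y i ^+ 2.
  by apply: eq_bigr => i _; rewrite ext_ord.
rewrite e1; move/le_trans; apply; rewrite ler_wpM2l //.
  by rewrite mulr_ge0 // exprn_ge0 // sqr_ge0.
apply: ler_sum => i _; apply: ler_sum => j _.
rewrite !ext_ord mxE big_mkord.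
by [].
Qed.

Lemma quad_mul {R : realType} N (A : 'M[R]_N) (y : 'I_N -> R) :
  \sum_(i < N) \sum_(j < N) y i * y j * A i j =
  \sum_(i < N) y i * (\sum_(j < N) A i j * y j).
Proof.
apply: eq_bigr => i _; rewrite mulr_sumr; apply: eq_bigr => j _; ring.
Qed.

Lemma quad_mulT {R : realType} N (A : 'M[R]_N) (y : 'I_N -> R) :
  \sum_(i < N) \sum_(j < N) y i * y j * A i j =
  \sum_(j < N) y j * (\sum_(i < N) y i * A i j).
Proof.
rewrite exchange_big /=; apply: eq_bigr => j _; rewrite mulr_sumr; apply: eq_bigr => i _; ring.
Qed.

Lemma sumsq0 {R : realType} N (y : 'I_N -> R) : \sum_(i < N) y i ^+ 2 <= 0 -> forall i, y i = 0.
Proof.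
move=> h i.
have h0 : \sum_(i < N) y i ^+ 2 = 0.
  by apply/eqP; rewrite eq_le h sumr_ge0 // => k _; rewrite sqr_ge0.
have := @psumr_eq0P _ _ _ (fun k => y k ^+ 2) (fun k _ => sqr_ge0 (y k)) h0 i isT.
by move/eqP; rewrite sqrf_eq0 => /eqP.
Qed.

Unset Implicit Arguments.

Theorem lemma12 (R : realType) :
  exists C1 C2 : R, 0 < C1 /\ 0 < C2 /\
    forall (N M : nat) (delta : R),
      (0 < M)%N -> 0 <= delta -> delta <= 2 / M%:R ->
      C1 * N%:R ^+ 2 * gamma R ^+ N <= M%:R ->
      hatH N M delta \in unitmx /\
      opnorm_le (lift_l2 (invmx (hatH N M delta))) (C2 * gamma R ^+ N).
Proof.
exists 8, 2; split; first lra; split; first lra.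
move=> N M d hM hd0 hd1 hC.
set H := hatH N M d.
have g0 : 0 < gamma R ^+ N.
  by rewrite exprn_gt0 // /gamma; have := @rr_ge2 R; rewrite /rr; nra.
have key := fun y => @key_quad R N M d y hM hd0 hd1 hC.
have Hu : H \in unitmx.
  rewrite -row_free_unit; apply: inj_row_free => w hw.
  have := key (fun i => w 0 i).
  rewrite quad_mulT.
  have -> : \sum_(j < N) w 0 j * (\sum_(i < N) w 0 i * hatH N M d i j) = 0.
    apply: big1 => j _.
    have := congr1 (fun m : 'rV_N => m 0 j) hw; rewrite /= !mxE => ->.
    by rewrite mulr0.
  rewrite mulr0 => /sumsq0 h.
  by apply/matrixP => a b; rewrite mxE (ord1 a) h.
split=> // u _.
set U : 'cV[R]_N := \col_i u i.
set Y := invmx H *m U.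
have HY : H *m Y = U by rewrite /Y mulKVmx.
have liftE : forall k, lift_l2 (invmx H) u k = ext (fun i => Y i 0) k.
  move=> k; rewrite /lift_l2 /ext; case: insub => // i.
  by rewrite /Y mxE; apply: eq_bigr => j _; rewrite /U mxE.
set Ys := \sum_(i < N) Y i 0 ^+ 2.
set Us := \sum_(i < N) u i ^+ 2.
set Pr := \sum_(i < N) Y i 0 * u i.
have h1 : Ys <= 2 * gamma R ^+ N * Pr.
  have := key (fun i => Y i 0); rewrite quad_mul.
  suff -> : \sum_(i < N) Y i 0 * (\sum_(j < N) hatH N M d i j * Y j 0) = Pr by [].
  apply: eq_bigr => i _; congr (_ * _).
  have := congr1 (fun m : 'cV_N => m i 0) HY; rewrite /= !mxE => <-.
  by [].
have h2 : Pr ^+ 2 <= Ys * Us.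
  have := CS N (ext (fun i => Y i 0)) u.
  have e1 : \sum_(i < N) ext (fun i => Y i 0) i * u i = Pr.
    by apply: eq_bigr => i _; rewrite ext_ord.
  have e2 : \sum_(i < N) ext (fun i => Y i 0) i ^+ 2 = Ys.
    by apply: eq_bigr => i _; rewrite ext_ord.
  by rewrite e1 e2.
have Ys0 : 0 <= Ys by apply: sumr_ge0 => i _; apply: sqr_ge0.
have Us0 : 0 <= Us by apply: sumr_ge0 => i _; apply: sqr_ge0.
have c0 : 0 < 2 * gamma R ^+ N by rewrite mulr_gt0.
have h3 := final_ineq Ys0 Us0 c0 h1 h2.
have eL : l2norm2 (lift_l2 (invmx H) u) = Ys%:E.
  rewrite /l2norm2 (@nneseries_split R _ 0 N); last by move=> k _; rewrite lee_fin sqr_ge0.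
  rewrite add0n eseries0 ?adde0; last first.
    by move=> k hk _; rewrite liftE ext_out // expr0n.
  rewrite big_mkord sumEFin /Ys; congr (_%:E); apply: eq_bigr => i _.
  by rewrite liftE ext_ord.
have eU : (Us%:E <= l2norm2 u)%E.
  have := @nneseries_lim_ge R (fun k => (u k ^+ 2)%:E) xpredT 0 N.
  rewrite big_mkord sumEFin => h; apply: h => k _ _; rewrite lee_fin sqr_ge0.
1: done.
rewrite eL; apply: (le_trans (_ : (Ys%:E <= ((2 * gamma R ^+ N) ^+ 2)%:E * Us%:E)%E)).
  by rewrite -EFinM lee_fin.
by rewrite lee_wpmul2l // lee_fin sqr_ge0.
Qed.
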